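(* Let $G=(V,E)$ be a $2$-edge-strongly biconnected directed graph. Then the directed graph output by Algorithm A (described in the context) on input $G$ is $2$-edge-strongly biconnected.
   Context: A directed graph is strongly biconnected if it is strongly connected and its underlying undirected graph (ignoring edge directions) is biconnected. A strongly biconnected component of a directed graph is a maximal strongly biconnected subgraph. A strongly biconnected directed graph $G=(V,E)$ is $2$-edge-strongly biconnected if it has at least three vertices and $(V,E\setminus\{e\})$ is strongly biconnected for every $e\in E$. For a directed graph $D=(V,F)$, an edge $e\in F$ is a b-bridge if $(V,F\setminus\{e\})$ is not strongly biconnected. A directed graph is $2$-edge-connected if it is strongly connected and remains strongly connected after deleting any single edge. Algorithm A, on input a $2$-edge-strongly biconnected directed graph $G=(V,E)$: (1) Choose $U\subseteq E$ such that $H=(V,U)$ is a minimal $2$-edge-connected spanning subgraph of $G$ (i.e. $H$ is $2$-edge-connected and deleting any edge of $U$ destroys $2$-edge-connectivity). (2) If $H$ is $2$-edge-strongly biconnected, output $H$ and stop. (3) Otherwise set $E_{2e}:=U$. While the underlying undirected graph of $(V,E_{2e})$ is not biconnected: compute the strongly biconnected components of $(V,E_{2e})$, find an edge $(v,w)\in E\setminus E_{2e}$ such that $v,w$ are not in the same strongly biconnected component of $(V,E_{2e})$, and add $(v,w)$ to $E_{2e}$. (4) Compute the set of b-bridges of $(V,E_{2e})$. For each such b-bridge $t$: while the underlying undirected graph of $(V,E_{2e}\setminus\{t\})$ is not biconnected, compute the strongly biconnected components of $(V,E_{2e}\setminus\{t\})$, find an edge $(u,w)\in E\setminus E_{2e}$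 such that $u,w$ are not in the same strongly biconnected component of $(V,E_{2e}\setminus\{t\})$, and add $(u,w)$ to $E_{2e}$. (5) Output $(V,E_{2e})$. *)

(* Defs.v *)
From mathcomp Require Import all_boot.
Set Implicit Arguments. Unset Strict Implicit. Unset Printing Implicit Defensive.

Section Graphs.
Variable T : finType.
Implicit Types (S : {set T}) (F : {set T * T}).

Definition drel S F : rel T :=
  fun x y => [&& x \in S, y \in S & (x, y) \in F].
Definition urel S F : rel T :=
  fun x y => drel S F x y || drel S F y x.

Definition strongly_connected S F : Prop :=
  forall x y, x \in S -> y \in S -> connect (drel S F) x y.

Definition und_connected S F : Prop :=
  forall x y, x \in S -> y \in S -> connect (urel S F) x y.

Definition und_biconnected S F : Prop :=
  und_connected S F /\ forall v, v \in S -> und_connected (S :\ v) F.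

Definition strongly_biconnected S F : Prop :=
  strongly_connected S F /\ und_biconnected S F.

Definition subgraph S' F' S F : Prop :=
  S' \subset S /\ F' \subset F /\
  forall x y, (x, y) \in F' -> x \in S' /\ y \in S'.

Definition sbc S' F' S F : Prop :=
  subgraph S' F' S F /\ strongly_biconnected S' F' /\
  forall S'' F'', subgraph S'' F'' S F -> strongly_biconnected S'' F'' ->
    S' \subset S'' -> F' \subset F'' -> S'' = S' /\ F'' = F'.

Definition same_sbc F v w : Prop :=
  exists S' F', sbc S' F' [set: T] F /\ v \in S' /\ w \in S'.

Definition two_edge_connected F : Prop :=
  strongly_connected [set: T] F /\
  forall e, e \in F -> strongly_connected [set: T] (F :\ e).

Definition two_edge_strongly_biconnected F : Prop :=
  strongly_biconnected [set: T] F /\ 3 <= #|T| /\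
  forall e, e \in F -> strongly_biconnected [set: T] (F :\ e).

Definition b_bridge F e : Prop :=
  e \in F /\ ~ strongly_biconnected [set: T] (F :\ e).

Definition min_2ec_spanning (E U : {set T * T}) : Prop :=
  U \subset E /\ two_edge_connected U /\
  forall e, e \in U -> ~ two_edge_connected (U :\ e).

Inductive state :=
  | Init
  | Phase3 of {set T * T}                  (* current E_2e, step (3) loop *)
  | Phase4 of {set T * T} & seq (T * T)    (* current E_2e, b-bridges still to process *)
  | Done of {set T * T}.

Inductive stepA (E : {set T * T}) : state -> state -> Prop :=
  | st_init_done (U : {set T * T}) :
      min_2ec_spanning E U -> two_edge_strongly_biconnected U ->
      stepA E Init (Done U)
  | st_init_3 (U : {set T * T}) :
      min_2ec_spanning E U -> ~ two_edge_strongly_biconnected U ->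
      stepA E Init (Phase3 U)
  | st_3_add (F : {set T * T}) (v w : T) :
      ~ und_biconnected [set: T] F ->
      (v, w) \in E -> (v, w) \notin F -> ~ same_sbc F v w ->
      stepA E (Phase3 F) (Phase3 ((v, w) |: F))
  | st_3_4 (F : {set T * T}) (s : seq (T * T)) :
      und_biconnected [set: T] F ->
      uniq s -> (forall e, e \in s <-> b_bridge F e) ->
      stepA E (Phase3 F) (Phase4 F s)
  | st_4_add (F : {set T * T}) (t : T * T) (s : seq (T * T)) (u w : T) :
      ~ und_biconnected [set: T] (F :\ t) ->
      (u, w) \in E -> (u, w) \notin F -> ~ same_sbc (F :\ t) u w ->
      stepA E (Phase4 F (t :: s)) (Phase4 ((u, w) |: F) (t :: s))
  | st_4_next (F : {set T * T}) (t : T * T) (s : seq (T * T)) :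
      und_biconnected [set: T] (F :\ t) ->
      stepA E (Phase4 F (t :: s)) (Phase4 F s)
  | st_4_done (F : {set T * T}) :
      stepA E (Phase4 F [::]) (Done F).

Inductive reachableA (E : {set T * T}) : state -> Prop :=
  | reach_init : reachableA E Init
  | reach_step (s s' : state) : reachableA E s -> stepA E s s' -> reachableA E s'.

End Graphs.

(* Main.v *)
Require Import Defs.
From mathcomp Require Import all_boot.
From Stdlib Require Import Classical ClassicalEpsilon.

Set Implicit Arguments. Unset Strict Implicit. Unset Printing Implicit Defensive.

Section Proofs.
Variable T : finType.
Implicit Types (S : {set T}) (F : {set T * T}).

Lemma urel_mono S1 S2 F1 F2 x y : S1 \subset S2 -> F1 \subset F2 ->
  connect (urel S1 F1) x y -> connect (urel S2 F2) x y.
Proof.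
move=> sS sF; apply: connect_sub => a b /orP [] /and3P [ha hb hab];
  apply: connect1; apply/orP; [left|right]; apply/and3P;
  split; by [apply: (subsetP sS) | apply: (subsetP sF)].
Qed.

Lemma drel_mono S F1 F2 x y : F1 \subset F2 ->
  connect (drel S F1) x y -> connect (drel S F2) x y.
Proof.
move=> sF; apply: connect_sub => a b /and3P [ha hb hab];
  apply: connect1; apply/and3P; split => //; exact: (subsetP sF).
Qed.

Lemma sb_mono F1 F2 : F1 \subset F2 ->
  strongly_biconnected [set: T] F1 -> strongly_biconnected [set: T] F2.
Proof.
move=> sF [sc [uc ub]]; split; last split.
- by move=> x y hx hy; apply: (drel_mono sF); apply: sc.
- by move=> x y hx hy; apply: (urel_mono (subxx _) sF); apply: uc.
- by move=> v hv x y hx hy; apply: (urel_mono (subxx _) sF); apply: ub.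
Qed.

Lemma sc_mono F1 F2 : F1 \subset F2 ->
  strongly_connected [set: T] F1 -> strongly_connected [set: T] F2.
Proof. by move=> sF sc x y hx hy; apply: (drel_mono sF); apply: sc. Qed.

Lemma tec_mono F1 F2 : F1 \subset F2 -> two_edge_connected F1 -> two_edge_connected F2.
Proof.
move=> sF [sc h]; split; first exact: sc_mono sc.
move=> e he; case: (boolP (e \in F1)) => e1.
- apply: sc_mono (h e e1); exact: setSD.
- apply: sc_mono sc; apply/subsetP => z hz; rewrite !inE (subsetP sF) // andbT.
  by apply: contraNneq e1 => <-.
Qed.

Lemma path_split (e : rel T) (P : T -> Prop) p c :
  path e c p -> P c -> ~ P (last c p) -> exists v w, e v w /\ P v /\ ~ P w.
Proof.
elim: p c => [|d p IH] c /=; first by move=> _ h1 /(_ h1).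
move=> /andP [ecd pp] Pc nP.
case: (classic (P d)) => Pd; first exact: (IH d pp Pd nP).
by exists c, d.
Qed.

Lemma cross S F' E' a b : a \in S -> b \in S ->
  connect (urel S E') a b -> ~ connect (urel S F') a b ->
  exists v w, [/\ v \in S, w \in S, (v, w) \in E', (v, w) \notin F' &
     ~ connect (urel S F') v w].
Proof.
move=> aS bS /connectP [p pp ->] nc.
have [v [w [evw [Pv nPw]]]] :=
  path_split (P := fun z => connect (urel S F') a z) pp (connect0 _ _) nc.
have symU : symmetric (urel S F').
  by move=> x y; rewrite /urel orbC.
have ncvw : ~ connect (urel S F') v w.
  by move=> h; apply: nPw; apply: connect_trans Pv h.
case/orP: evw => /and3P [vS wS h].
- exists v, w; split => //.
  apply/negP => hF; apply: ncvw; apply: connect1; apply/orP; left; apply/and3P; by split.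
- exists w, v; split => //.
  + apply/negP => hF; apply: ncvw; apply: connect1; apply/orP; right; apply/and3P; by split.
  + by rewrite (sym_connect_sym symU).
Qed.

Lemma not_same_T F' v w : ~ connect (urel [set: T] F') v w -> ~ same_sbc F' v w.
Proof.
move=> nc [S' [F'' [[[_ [sF _]] [[_ [uc _]] _]] [vS wS]]]].
by apply: nc; apply: (urel_mono (subsetT _) sF); apply: uc.
Qed.

Lemma not_same_x F' v w x : v \in [set: T] :\ x -> w \in [set: T] :\ x ->
  ~ connect (urel ([set: T] :\ x) F') v w -> ~ same_sbc F' v w.
Proof.
move=> vS wS nc [S' [F'' [[[_ [sF _]] [[_ [uc ub]] _]] [vS' wS']]]].
apply: nc; case: (boolP (x \in S')) => xS.
- apply: (urel_mono _ sF (ub x xS v w _ _)).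
  + by apply: setSD; apply: subsetT.
  + by move: vS; rewrite !inE vS' andbT.
  + by move: wS; rewrite !inE wS' andbT.
- apply: (urel_mono _ sF (uc v w vS' wS')).
  apply/subsetP => z hz; rewrite !inE andbT; by apply: contraNneq xS => <-.
Qed.

Lemma key F' E' : und_biconnected [set: T] E' -> ~ und_biconnected [set: T] F' ->
  exists v w, [/\ (v, w) \in E', (v, w) \notin F' & ~ same_sbc F' v w].
Proof.
move=> [ucE ubE] nub.
case: (classic (und_connected [set: T] F')) => uc.
- have [x hx] : exists x, ~ und_connected ([set: T] :\ x) F'.
    apply: NNPP => hn; apply: nub; split => // x _.
    by apply: NNPP => h; apply: hn; exists x.
  have [a ha] : exists a, ~ forall b, a \in [set: T] :\ x -> b \in [set: T] :\ x ->
      connect (urel ([set: T] :\ x) F') a b by apply: not_all_ex_not.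
  have [b hb] := not_all_ex_not _ _ ha.
  have aS : a \in [set: T] :\ x by apply: NNPP => h; apply: hb => /h.
  have bS : b \in [set: T] :\ x by apply: NNPP => h; apply: hb => _ /h.
  have nc : ~ connect (urel ([set: T] :\ x) F') a b by move=> h; apply: hb.
  have [v [w [vS wS hE hF ncvw]]] := cross aS bS (ubE x (in_setT x) a b aS bS) nc.
  by exists v, w; split => //; apply: not_same_x vS wS ncvw.
- have [a ha] : exists a, ~ forall b, a \in [set: T] -> b \in [set: T] ->
      connect (urel [set: T] F') a b by apply: not_all_ex_not.
  have [b hb] := not_all_ex_not _ _ ha.
  have nc : ~ connect (urel [set: T] F') a b by move=> h; apply: hb.
  have [v [w [vS wS hE hF ncvw]]] :=
    cross (in_setT a) (in_setT b) (ucE a b (in_setT a) (in_setT b)) nc.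
  by exists v, w; split => //; apply: not_same_T ncvw.
Qed.

Lemma exists_min (E : {set T * T}) : two_edge_connected E -> exists U, min_2ec_spanning E U.
Proof.
move=> hE.
suff H : forall n (U : {set T * T}), #|U| <= n -> U \subset E -> two_edge_connected U ->
    exists U', min_2ec_spanning E U' by exact: (H _ E (leqnn _) (subxx _) hE).
elim=> [|n IH] U hn sU hU.
- exists U; split => //; split => // e he.
  by move: hn; rewrite leqn0 => /eqP/cards0_eq => U0; rewrite U0 inE in he.
case: (classic (exists e, e \in U /\ two_edge_connected (U :\ e))).
- move=> [e [eU h]]; apply: (IH (U :\ e)) => //.
  + by move: hn; rewrite (cardsD1 e U) eU add1n ltnS.
  + by apply: subset_trans sU; apply: subD1set.
- move=> hn'; exists U; split => //; split => // e eU h; apply: hn'; by exists e.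
Qed.


Definition Inv (E : {set T * T}) (st : state T) : Prop :=
  match st with
  | Init => True
  | Phase3 F => F \subset E /\ two_edge_connected F
  | Phase4 F s => [/\ F \subset E, two_edge_connected F,
       strongly_biconnected [set: T] F &
       forall e, e \in F -> e \notin s -> strongly_biconnected [set: T] (F :\ e)]
  | Done H => two_edge_strongly_biconnected H
  end.

Lemma inv_reach (E : {set T * T}) st : two_edge_strongly_biconnected E ->
  reachableA E st -> Inv E st.
Proof.
move=> hE; elim=> [//| s1 s2 _ IH hst]; case: hst IH => /=.
- by [].
- by move=> U [sU [hU _]] _ _.
- move=> F v w _ vE _ _ [sF hF]; split.
  + by rewrite subUset sub1set vE.
  + by apply: tec_mono hF; apply: subsetUr.
- move=> F s ub _ hs [sF hF]; split => //.
  + by split => //; case: hF.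
  + move=> e eF es; apply: NNPP => h; apply: (negP es); apply/(hs e); by split.
- move=> F t s u w _ uE uF _ [sF hF sbF he]; split.
  + by rewrite subUset sub1set uE.
  + by apply: tec_mono hF; apply: subsetUr.
  + by apply: sb_mono sbF; apply: subsetUr.
  + move=> e; rewrite in_setU1 => /orP [/eqP -> _|eF es].
    * by rewrite setU1K.
    * apply: sb_mono (he e eF es); apply: setSD; exact: subsetUr.
- move=> F t s ub [sF hF sbF he]; split => // e eF es.
  case: (eqVneq e t) => [et|net].
  + subst e; split => //; by case: hF => _; apply.
  + by apply: he => //; rewrite inE negb_or net.
- move=> F [sF hF sbF he]; split => //; split => //.
  + by case: hE => _ [].
  + by move=> e eF; apply: he.
Qed.
End Proofs.

Theorem mainTheorem2 (T : finType) (E : {set T * T}) :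
  two_edge_strongly_biconnected E ->
  forall st : state T, reachableA E st ->
    (exists H, st = Done H /\ two_edge_strongly_biconnected H) \/
    (exists st', stepA E st st').
Proof.
move=> hE st hr; have I := inv_reach hE hr; clear hr.
have [[scE ubE] [h3 hall]] := hE.
case: st I => /=.
- move=> _; right.
  have tE : two_edge_connected E.
    by split => // e he; case: (hall e he).
  have [U hU] := exists_min tE.
  case: (classic (two_edge_strongly_biconnected U)) => h.
  + by exists (Done U); apply: st_init_done.
  + by exists (Phase3 U); apply: st_init_3.
- move=> F [sF hF]; right.
  case: (classic (und_biconnected [set: T] F)) => ub.
  + exists (Phase4 F (enum [pred e | is_left (excluded_middle_informative (b_bridge F e))])).
    apply: st_3_4 => //; first exact: enum_uniq.
    move=> e; rewrite mem_enum inE.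
    by case: excluded_middle_informative.
  + have [v [w [vE vF ns]]] := key ubE ub.
    by exists (Phase3 ((v, w) |: F)); apply: st_3_add.
- move=> F [|t s] [sF hF sbF he]; right.
  + by exists (Done F); apply: st_4_done.
  + case: (classic (und_biconnected [set: T] (F :\ t))) => ub.
    * by exists (Phase4 F s); apply: st_4_next.
    * have ubEt : und_biconnected [set: T] (E :\ t).
        case: (boolP (t \in E)) => tE; first by case: (hall t tE).
        have sub : E \subset E :\ t.
          apply/subsetP => z hz; rewrite !inE hz andbT; by apply: contraNneq tE => <-.
        by case: (sb_mono sub (conj scE ubE)).
      have [u [w [uE uF ns]]] := key ubEt ub.
      exists (Phase4 ((u, w) |: F) (t :: s)); apply: st_4_add => //.
      - by move: uE; rewrite inE => /andP [].
      - move: uE uF; rewrite !inE => /andP [-> _]; by [].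
- by move=> H hH; left; exists H.
Qed.
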